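(* Let $G$ be a group, $X=\{1,\dots,d\}$, and $\psi:G\to S_d\ltimes G^d$ a homomorphism (wreath recursion). For $n\ge0$ let $K_n$ be the set of $g\in G$ such that $g(v)=v$ and $g|_v=1$ for all $v\in X^n$. Then $K_n\supseteq K_{n-1}$. If $\bigcup_{n\ge0}K_n$ equals the kernel of the action of $G$ on $X^*$ (i.e., of the epimorphism $G\to\overline{G}$), then the natural epimorphism $\mathcal{V}_\psi\to\mathcal{V}_{\overline{G}}$ is an isomorphism.
   Context: Elements of $S_d\ltimes G^d$ are written $\sigma(g_1,\dots,g_d)$ with multiplication $\sigma(g_1,\ldots,g_d)\pi(h_1,\ldots,h_d)=\sigma\pi(g_{\pi(1)}h_1,\ldots,g_{\pi(d)}h_d)$. The homomorphism $\psi$ defines an action of $G$ on the rooted tree $X^*$ of finite words by $g(xw)=\sigma(x)g_x(w)$ where $\psi(g)=\sigma(g_1,\ldots,g_d)$, and sections $g|_v\in G$ by $g|_x=g_x$ and $g|_{xv}=(g|_x)|_v$, so that $g(vw)=g(v)g|_v(w)$. $\overline{G}$ is the quotient of $G$ by the kernel of this action (a self-similar group acting faithfully on $X^*$). A complete antichain is a finite set of words in $X^*$, none a prefix of another, such that every infinite sequence has exactly one of them as prefix. $\mathcal{V}_\psi$ is the group of equivalence classes of tables $\begin{pmatrix}v_1&\cdots&v_n\\ g_1&\cdots&g_n\\ u_1&\cdots&u_n\end{pmatrix}$ with $g_i\in G$ and $\{v_i\}$, $\{u_i\}$ complete antichains, where tables are equivalent if they become equal up to permutation of columns after iteratively replacing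 a column $(v,g,u)$ by the $d$ columns $(vi,\ g_i,\ u\sigma(i))$, $i=1,\ldots,d$, with $\psi(g)=\sigma(g_1,\ldots,g_d)$; multiplication is $(w_i,g_i,u_i)_i\cdot(v_i,h_i,w_i)_i=(v_i,g_ih_i,u_i)_i$ (after bringing tables to matching form). $\mathcal{V}_{\overline{G}}$ is defined in the same way with $\overline{G}$ (equivalently, the group of homeomorphisms $g$ of $X^\omega$ with $g(v_iw)=u_i\bar g_i(w)$), and the natural epimorphism replaces each $g_i$ by its image in $\overline{G}$. *)

(* Defs.v *)
From HB Require Import structures.
From mathcomp Require Import all_boot perm.
From Stdlib Require Import Permutation.

Set Implicit Arguments.
Unset Strict Implicit.
Unset Printing Implicit Defensive.

Record AbsGroup := {
  gcar :> Type;
  gmul : gcar -> gcar -> gcar;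
  gone : gcar;
  ginv : gcar -> gcar;
  gmulA : forall x y z, gmul x (gmul y z) = gmul (gmul x y) z;
  gmul1g : forall x, gmul gone x = x;
  gmulVg : forall x, gmul (ginv x) x = gone }.

(* Words over X = 'I_d (X = {1..d} reindexed as {0..d-1}). *)
Definition word (d : nat) := seq 'I_d.

(* psi : G -> S_d ⋉ G^d, psi(g) = sg g (sc g 1, ..., sc g d), is a homomorphism
   for the multiplication
   σ(g_1..g_d) π(h_1..h_d) = σπ(g_{π(1)} h_1, ..., g_{π(d)} h_d),
   where σπ is the composite x |-> σ(π(x)). *)
Definition is_wreath_hom (G : AbsGroup) (d : nat)
  (sg : G -> {perm 'I_d}) (sc : G -> 'I_d -> G) : Prop :=
  forall g h : G,
    (forall x, sg (gmul g h) x = sg g (sg h x)) /\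
    (forall x, sc (gmul g h) x = gmul (sc g (sg h x)) (sc h x)).

Section Action.
Variables (G : AbsGroup) (d : nat) (sg : G -> {perm 'I_d}) (sc : G -> 'I_d -> G).

Fixpoint act (g : G) (w : word d) : word d :=
  match w with
  | [::] => [::]
  | x :: w' => sg g x :: act (sc g x) w'
  end.

Fixpoint secw (g : G) (v : word d) : G :=
  match v with
  | [::] => g
  | x :: v' => secw (sc g x) v'
  end.

Definition Kn (n : nat) (g : G) : Prop :=
  forall v : word d, size v = n -> act g v = v /\ secw g v = gone G.

Definition in_kernel (g : G) : Prop := forall w : word d, act g w = w.

End Action.

Section Tables.
Variable d : nat.

Definition prefix_inf (v : word d) (s : nat -> 'I_d) : Prop :=
  v = mkseq s (size v).

Definition complete_antichain (A : seq (word d)) : Prop :=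
  [/\ uniq A,
      (forall v w, v \in A -> w \in A -> prefix v w -> v = w),
      (forall s : nat -> 'I_d, exists v, v \in A /\ prefix_inf v s) &
      (forall (s : nat -> 'I_d) v w, v \in A -> w \in A ->
          prefix_inf v s -> prefix_inf w s -> v = w)].

Variable A : Type.

(* a table: list of columns (v_i, g_i, u_i) *)
Definition table := seq (word d * A * word d).

Definition top_row (T : table) : seq (word d) := [seq c.1.1 | c <- T].
Definition bot_row (T : table) : seq (word d) := [seq c.2 | c <- T].

Definition valid_table (T : table) : Prop :=
  complete_antichain (top_row T) /\ complete_antichain (bot_row T).

Variables (lp : A -> 'I_d -> 'I_d) (sc : A -> 'I_d -> A).

Definition expand_col (c : word d * A * word d) : table :=
  let: (v, g, u) := c in
  [seq (rcons v x, sc g x, rcons u (lp g x)) | x <- enum 'I_d].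

Inductive expands : table -> table -> Prop :=
  | expands_refl T : expands T T
  | expands_step l c r T' :
      expands (l ++ expand_col c ++ r) T' -> expands (l ++ c :: r) T'.

Definition tab_equiv (T1 T2 : table) : Prop :=
  exists T1' T2', [/\ expands T1 T1', expands T2 T2' & Permutation T1' T2'].

End Tables.

Section Gbar.
Variables (G : AbsGroup) (d : nat) (sg : G -> {perm 'I_d}) (sc : G -> 'I_d -> G).

(* Gbar = image of G in the group of maps of X^* (G modulo the kernel) *)
Definition Gbar := { f : word d -> word d | exists g : G, forall w, f w = act sg sc g w }.

Lemma gbar_sec_proof (f : Gbar) (x : 'I_d) :
  exists g : G, forall w, behead (proj1_sig f (x :: w)) = act sg sc g w.
Proof.
case: f => f [g Hg] /=; exists (sc g x) => w; by rewrite Hg.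
Qed.

Definition gbar_sec (f : Gbar) (x : 'I_d) : Gbar :=
  exist _ (fun w => behead (proj1_sig f (x :: w))) (gbar_sec_proof f x).

Definition gbar_lp (f : Gbar) (x : 'I_d) : 'I_d := head x (proj1_sig f [:: x]).

Definition gbar_pi (g : G) : Gbar :=
  exist _ (act sg sc g) (ex_intro _ g (fun w => erefl)).

Definition map_table_pi (T : table d G) : table d Gbar :=
  [seq (c.1.1, gbar_pi c.1.2, c.2) | c <- T].

End Gbar.

(* Main.v *)
Require Import Defs.
From HB Require Import structures.
From mathcomp Require Import all_boot perm.
From Stdlib Require Import Permutation.
From Stdlib Require Import ProofIrrelevance FunctionalExtensionality.

Set Implicit Arguments.
Unset Strict Implicit.
Unset Printing Implicit Defensive.

Section Grp.
Variable G : AbsGroup.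

Lemma gidem (e : G) : gmul e e = e -> e = gone G.
Proof.
move=> H; have: gmul (ginv e) (gmul e e) = gmul (ginv e) e by rewrite H.
by rewrite gmulA gmulVg gmul1g.
Qed.
Lemma gmulgV (x : G) : gmul x (ginv x) = gone G.
Proof.
apply: gidem; by rewrite -gmulA [gmul (ginv x) _]gmulA gmulVg gmul1g.
Qed.

Lemma gmulg1 (x : G) : gmul x (gone G) = x.
Proof. by rewrite -(gmulVg x) gmulA gmulgV gmul1g. Qed.

End Grp.

Section Wreath.
Variables (G : AbsGroup) (d : nat) (sg : G -> {perm 'I_d}) (sc : G -> 'I_d -> G).
Hypothesis Hpsi : is_wreath_hom sg sc.

Lemma sg1 x : sg (gone G) x = x.
Proof.
have [H _] := Hpsi (gone G) (gone G).
have := H x; rewrite gmul1g => /perm_inj; by [].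
Qed.

Lemma sc1 x : sc (gone G) x = gone G.
Proof.
have [_ H] := Hpsi (gone G) (gone G).
have := H x; rewrite gmul1g sg1 => E; apply: gidem; by rewrite -E.
Qed.

Lemma act1 w : act sg sc (gone G) w = w.
Proof. elim: w => [|x w IH] //=; by rewrite sg1 sc1 IH. Qed.

Lemma actM g h w : act sg sc (gmul g h) w = act sg sc g (act sg sc h w).
Proof.
elim: w g h => [|x w IH] g h //=.
have [H1 H2] := Hpsi g h; by rewrite H1 H2 IH.
Qed.

Lemma act_rcons g u x :
  act sg sc g (rcons u x) = rcons (act sg sc g u) (sg (secw sc g u) x).
Proof. elim: u g => [|y u IH] g //=; by rewrite IH. Qed.

Lemma secw_rcons g u x : secw sc g (rcons u x) = sc (secw sc g u) x.
Proof. elim: u g => [|y u IH] g //=. Qed.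

Lemma Kn_succ n g : Kn sg sc n g -> Kn sg sc n.+1 g.
Proof.
move=> H v; case/lastP: v => [|u x] //; rewrite size_rcons => -[] Hs.
have [E1 E2] := H u Hs.
by rewrite act_rcons secw_rcons E1 E2 sg1 sc1.
Qed.

Lemma Kn_mono n N g : n <= N -> Kn sg sc n g -> Kn sg sc N g.
Proof.
elim: N => [|N IH]; first by rewrite leqn0 => /eqP ->.
rewrite leq_eqVlt => /orP [/eqP -> //|]; rewrite ltnS => Hn Hk.
by apply: Kn_succ; apply: IH.
Qed.

Lemma Kn_S N k : Kn sg sc N.+1 k -> forall y, sg k y = y /\ Kn sg sc N (sc k y).
Proof.
move=> H y; split.
  have Hs : size (y :: nseq N y) = N.+1 by rewrite /= size_nseq.
  have [E _] := H _ Hs.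
  by case: E.
move=> w Hw; have Hs : size (y :: w) = N.+1 by rewrite /= Hw.
have [E1 E2] := H _ Hs.
by case: E1 => _ ->; split.
Qed.

End Wreath.

Section Exp.
Variables (d : nat) (A : Type) (lp : A -> 'I_d -> 'I_d) (sc : A -> 'I_d -> A).

Fixpoint expN (n : nat) (c : word d * A * word d) : table d A :=
  match n with
  | 0 => [:: c]
  | n'.+1 => flatten (map (expN n') (expand_col lp sc c))
  end.

Lemma expands_trans T1 T2 T3 :
  expands lp sc T1 T2 -> expands lp sc T2 T3 -> expands lp sc T1 T3.
Proof.
elim => [//|l c r T' _ IH] H; apply: expands_step; exact: IH.
Qed.

Lemma expands_cong M M' l r :
  expands lp sc M M' -> expands lp sc (l ++ M ++ r) (l ++ M' ++ r).
Proof.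
elim => [T|l0 c r0 T' _ IH]; first exact: expands_refl.
have -> : l ++ (l0 ++ c :: r0) ++ r = (l ++ l0) ++ c :: (r0 ++ r).
  by rewrite -!catA.
apply: expands_step.
have <- : l ++ (l0 ++ expand_col lp sc c ++ r0) ++ r
        = (l ++ l0) ++ expand_col lp sc c ++ (r0 ++ r) by rewrite -!catA.
exact: IH.
Qed.

Lemma expands_flat (F : word d * A * word d -> table d A) T :
  (forall c, expands lp sc [:: c] (F c)) -> expands lp sc T (flatten (map F T)).
Proof.
move=> HF; elim: T => [|c T IH] /=; first exact: expands_refl.
apply: (@expands_trans _ (F c ++ T)).
  have := expands_cong [::] T (HF c); by [].
have := expands_cong (F c) [::] IH; by rewrite !cats0.
Qed.

Lemma expands_expN n c : expands lp sc [:: c] (expN n c).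
Proof.
elim: n c => [|n IH] c /=; first exact: expands_refl.
apply: (@expands_trans _ (expand_col lp sc c)).
  have := @expands_step _ _ lp sc [::] c [::] (expand_col lp sc c).
  rewrite /= cats0; apply; exact: expands_refl.
exact: expands_flat.
Qed.

End Exp.

Section PermFlat.
Variables (A B C : Type) (f : A -> B) (E : nat -> A -> seq C).

Lemma in_map_ex (y : B) (l : seq A) : List.In y (map f l) -> exists a, List.In a l /\ f a = y.
Proof.
elim: l => [|a l IH] //= [<-|H]; first by exists a; split; [left|].
have [b [Hb Eb]] := IH H; exists b; split; [right|]; by [].
Qed.

Lemma perm_flat (L1 L2 : seq A) :
  Permutation (map f L1) (map f L2) ->
  (forall a b, List.In a L1 -> List.In b L2 -> f a = f b ->
     exists n, forall N, n <= N -> E N a = E N b) ->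
  exists n, forall N, n <= N ->
    Permutation (flatten (map (E N) L1)) (flatten (map (E N) L2)).
Proof.
elim: L1 L2 => [|a L1 IH] L2 HP Hab.
  have := Permutation_nil HP; case: L2 {HP Hab} => // _.
  by exists 0 => N _ /=.
have Hin : List.In (f a) (map f L2).
  apply: (Permutation_in _ HP); by left.
have [b [Hb Eb]] := in_map_ex Hin.
have [B1 [B2 EB]] := List.in_split _ _ Hb.
subst L2.
have EE : (B1 ++ b :: B2)%list = B1 ++ b :: B2 by [].
rewrite EE in HP Hab Hb.
have HP' : Permutation (map f L1) (map f (B1 ++ B2)).
  rewrite map_cat; apply: (@Permutation_cons_app_inv _ _ _ _ (f a)).
  move: HP; by rewrite map_cat /= Eb.
have Hab' : forall a' b', List.In a' L1 -> List.In b' (B1 ++ B2) -> f a' = f b' ->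
     exists n, forall N, n <= N -> E N a' = E N b'.
  move=> a' b' Ha' Hb' Hf; apply: Hab => //; first by right.
  apply List.in_or_app; have [H|H] := List.in_app_or _ _ _ Hb'; [left|right;right]; by [].
have [n1 Hn1] := IH _ HP' Hab'.
have [n2 Hn2] := Hab a b (or_introl erefl) Hb (esym Eb).
exists (maxn n1 n2) => N HN.
rewrite geq_max in HN; case/andP: HN => HN1 HN2.
rewrite /= Hn2 // map_cat flatten_cat /= .
apply: Permutation_trans (Permutation_app_head _ (Hn1 N HN1)) _.
rewrite map_cat flatten_cat.
apply: Permutation_sym; exact: Permutation_app_swap_app.
Qed.

End PermFlat.

Section Main.
Variables (G : AbsGroup) (d : nat) (sg : G -> {perm 'I_d}) (sc : G -> 'I_d -> G).
Hypothesis Hpsi : is_wreath_hom sg sc.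

Definition lpG := fun (g : G) (x : 'I_d) => sg g x.

Lemma expN_K N k g v u : Kn sg sc N k ->
  expN lpG sc N (v, gmul k g, u) = expN lpG sc N (v, g, u).
Proof.
elim: N k g v u => [|N IH] k g v u Hk /=.
  have [_ E] := Hk [::] erefl; rewrite /= in E; by rewrite E gmul1g.
congr flatten; rewrite /expand_col -!map_comp; apply: eq_map => x /=.
have [H1 H2] := Hpsi k g.
rewrite /lpG H1 H2.
have [E K] := Kn_S Hk (sg g x).
rewrite E; exact: IH.
Qed.

Lemma gbar_eq (f1 f2 : Gbar sg sc) : proj1_sig f1 = proj1_sig f2 -> f1 = f2.
Proof.
case: f1 => p1 h1; case: f2 => p2 h2 /= E; subst p2.
by rewrite (proof_irrelevance _ h1 h2).
Qed.

Definition pic (c : word d * G * word d) : word d * Gbar sg sc * word d :=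
  (c.1.1, gbar_pi sg sc c.1.2, c.2).

Lemma map_expand c :
  map_table_pi sg sc (expand_col lpG sc c) =
  expand_col (@gbar_lp G d sg sc) (@gbar_sec G d sg sc) (pic c).
Proof.
case: c => [[v g] u]; rewrite /map_table_pi /expand_col -map_comp /=.
apply: eq_map => x /=; congr (_, _, _).
exact: gbar_eq.
Qed.

Lemma map_expands T T' : expands lpG sc T T' ->
  expands (@gbar_lp G d sg sc) (@gbar_sec G d sg sc)
     (map_table_pi sg sc T) (map_table_pi sg sc T').
Proof.
elim => [T0|l c r T0 _ IH]; first exact: expands_refl.
rewrite /map_table_pi map_cat /=.
apply: expands_step.
move: IH; rewrite /map_table_pi !map_cat.
have := map_expand c; rewrite /map_table_pi => ->; by [].
Qed.

Lemma split_map (T : table d G) l c r :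
  map_table_pi sg sc T = l ++ c :: r ->
  exists lT cT rT, [/\ T = lT ++ cT :: rT, map_table_pi sg sc lT = l,
                       pic cT = c & map_table_pi sg sc rT = r].
Proof.
elim: l T => [|c0 l IH] [|cT T] //= [E1 E2].
  by exists [::], cT, T; split.
have [lT [cT' [rT [-> H1 H2 H3]]]] := IH _ E2.
exists (cT :: lT), cT', rT; split => //.
by rewrite /map_table_pi /= -E1; congr cons.
Qed.

Lemma lift_expands T S :
  expands (@gbar_lp G d sg sc) (@gbar_sec G d sg sc) (map_table_pi sg sc T) S ->
  exists T', expands lpG sc T T' /\ map_table_pi sg sc T' = S.
Proof.
move=> H; remember (map_table_pi sg sc T) as X eqn:EX; move: T EX.
elim: H => [T0|l c r T' _ IH] T EX.
  by exists T; split; [exact: expands_refl|].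
have [lT [cT [rT [ET H1 H2 H3]]]] := split_map (esym EX).
have EX' : l ++ expand_col (@gbar_lp G d sg sc) (@gbar_sec G d sg sc) c ++ r
   = map_table_pi sg sc (lT ++ expand_col lpG sc cT ++ rT).
  rewrite /map_table_pi !map_cat.
  by have := map_expand cT; rewrite /map_table_pi => ->; rewrite H2 -H1 -H3.
have [T2 [HT2 ET2]] := IH _ EX'.
exists T2; split => //; rewrite ET; exact: expands_step.
Qed.

Lemma surj (S : table d (Gbar sg sc)) :
  exists T : table d G, map_table_pi sg sc T = S.
Proof.
elim: S => [|[[v [p [g Hg]]] u] S [T ET]]; first by exists [::].
exists ((v, g, u) :: T); rewrite /map_table_pi /= -ET; congr cons.
congr (_, _, _); apply: gbar_eq => /=.
apply: functional_extensionality => w; by rewrite Hg.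
Qed.

End Main.

Theorem proposition3p9 (G : AbsGroup) (d : nat)
  (sg : G -> {perm 'I_d}) (sc : G -> 'I_d -> G)
  (Hpsi : is_wreath_hom sg sc) :
  (forall (n : nat) (g : G), Kn sg sc n g -> Kn sg sc n.+1 g) /\
  ((forall g : G, in_kernel sg sc g <-> exists n, Kn sg sc n g) ->
   (forall T1 T2 : table d G, valid_table T1 -> valid_table T2 ->
      (tab_equiv (fun g x => sg g x) sc T1 T2 <->
       tab_equiv (@gbar_lp G d sg sc) (@gbar_sec G d sg sc)
                 (map_table_pi sg sc T1) (map_table_pi sg sc T2))) /\
   (forall S : table d (Gbar sg sc), valid_table S ->
      exists T : table d G, valid_table T /\ map_table_pi sg sc T = S)).
Proof.
split; first exact: Kn_succ.
move=> Hker; split.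
  move=> T1 T2 _ _; split.
    move=> [T1' [T2' [H1 H2 HP]]].
    exists (map_table_pi sg sc T1'), (map_table_pi sg sc T2'); split.
    - exact: map_expands.
    - exact: map_expands.
    - exact: Permutation_map.
  move=> [S1 [S2 [H1 H2 HP]]].
  have [T1' [E1 M1]] := lift_expands H1.
  have [T2' [E2 M2]] := lift_expands H2.
  subst S1 S2.
  have Hab : forall a b, List.In a T1' -> List.In b T2' -> pic sg sc a = pic sg sc b ->
     exists n, forall N, n <= N -> expN (lpG sg) sc N a = expN (lpG sg) sc N b.
    move=> [[v g] u] [[v' h] u'] _ _ /= [Ev Eg Eu]; subst v' u'.
    have Eact : act sg sc g = act sg sc h by [].
    have Hk : in_kernel sg sc (gmul g (ginv h)).
      move=> w; rewrite (actM Hpsi) Eact -(actM Hpsi) gmulgV; exact: act1.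
    have [n Kk] := (Hker _).1 Hk.
    exists n => N HN.
    have -> : g = gmul (gmul g (ginv h)) h by rewrite -gmulA gmulVg gmulg1.
    apply: expN_K => //; exact: Kn_mono HN Kk.
  have [n Hn] := @perm_flat _ _ _ (@pic G d sg sc) (expN (lpG sg) sc) T1' T2' HP Hab.
  exists (flatten (map (expN (lpG sg) sc n) T1')),
         (flatten (map (expN (lpG sg) sc n) T2')); split.
  - apply: expands_trans E1 _; apply: expands_flat => c; exact: expands_expN.
  - apply: expands_trans E2 _; apply: expands_flat => c; exact: expands_expN.
  - exact: Hn.
move=> S HS; have [T ET] := surj S; exists T; split => //.
move: HS; rewrite -ET /valid_table /top_row /bot_row /map_table_pi -!map_comp.
by [].
Qed.
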